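(* Let $q$ be a prime and $P\ge2$, $M\ge1$, $K\ge1$ integers. Define $$E_2(q,P,M,K):=\sum_{\chi\ne\chi_0}\sum_{m=1}^{M}\frac1m\sum_{k>K}\frac{\mu(k)}{k}\log\bigl(L_P(km,\chi^{km})\bigr).$$ Then $$|E_2(q,P,M,K)|\le\frac{2P(q-1)}{K^2(P-1)(P^K-1)},$$ a bound independent of $M$.
   Context: $\chi$ runs over the non-principal Dirichlet characters modulo $q$ ($\chi_0$ principal), $\mu$ is the Möbius function, and for a Dirichlet character $\chi$ and $\Re(s)>1$ (or $\Re(s)\ge1$ when $\chi$ is non-principal), $L_P(s,\chi):=\prod_{p>P}\bigl(1-\chi(p)p^{-s}\bigr)^{-1}=L(s,\chi)\prod_{p\le P}\bigl(1-\chi(p)p^{-s}\bigr)$, with $\log$ the branch given by $\log L_P(s,\chi)=-\sum_{p>P}\log(1-\chi(p)p^{-s})$ using the principal logarithm series. *)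

(* Defs.v *)
From Stdlib Require Import Reals List.
From Coquelicot Require Import Coquelicot.
From mathcomp Require Import ssreflect ssrfun ssrbool eqtype ssrnat seq div prime.

Open Scope R_scope.

(* Sum of a complex series, componentwise (Coquelicot's Series = Lim_seq of
   partial sums).  Agrees with the usual sum for convergent series. *)
Definition CSeries (a : nat -> C) : C :=
  (Series (fun n => Re (a n)), Series (fun n => Im (a n))).

Fixpoint Cpown (z : C) (n : nat) : C :=
  match n with O => RtoC 1 | S n' => Cmult z (Cpown z n') end.

Definition DirChar (q : nat) (chi : nat -> C) : Prop :=
  chi 1%nat = RtoC 1 /\
  (forall m n : nat, chi (m * n)%nat = Cmult (chi m) (chi n)) /\
  (forall n : nat, chi (n + q)%nat = chi n) /\
  (forall n : nat, chi n = RtoC 0 <-> ~~ coprime n q).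

Definition principal_char (q : nat) : nat -> C :=
  fun n => if coprime n q then RtoC 1 else RtoC 0.

(* Moebius function (value at 0 is irrelevant, set to 0) *)
Definition mobius (n : nat) : R :=
  if n == 0%nat then 0
  else if all (fun p => logn p n == 1%nat) (primes n)
       then (-1) ^ (size (primes n)) else 0.

(* principal branch of log(1 - w), |w| < 1, via its power series:
   log(1 - w) = - sum_{j>=1} w^j / j *)
Definition log_one_minus (w : C) : C :=
  Copp (CSeries (fun j => Cdiv (Cpown w (S j)) (RtoC (INR (S j))))).

(* log L_P(s, psi) := - sum_{p > P, p prime} log(1 - psi(p) p^{-s}),
   for a natural number exponent s (only s = k m >= 2 is used). *)
Definition logLP (P s : nat) (psi : nat -> C) : C :=
  Copp (CSeries (fun p =>
    if prime p && (P < p)%nat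
    then log_one_minus (Cmult (psi p) (RtoC (/ (INR p ^ s))))
    else RtoC 0)).

Definition Csum_list {A : Type} (l : list A) (f : A -> C) : C :=
  fold_right (fun a acc => Cplus (f a) acc) (RtoC 0) l.

Definition E2_chi (P M K : nat) (chi : nat -> C) : C :=
  Csum_list (List.seq 1 M) (fun m =>
    Cmult (RtoC (/ INR m))
      (CSeries (fun k =>
         if (K < k)%nat
         then Cmult (RtoC (mobius k / INR k))
                    (logLP P (k * m) (fun n => Cpown (chi n) (k * m)))
         else RtoC 0))).

(* E_2(q,P,M,K), the outer sum running over a duplicate-free list [chars]
   enumerating the non-principal Dirichlet characters modulo q. *)
Definition E2 (P M K : nat) (chars : list (nat -> C)) : C :=
  Csum_list chars (E2_chi P M K).

(* Main.v *)
Require Import Defs.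
From Stdlib Require Import Reals List Lra Lia FunctionalExtensionality.
From Coquelicot Require Import Coquelicot.
From mathcomp Require Import ssreflect ssrfun ssrbool eqtype ssrnat seq div prime.
From mathcomp Require Import fintype finset fingroup ssralg finalg zmodp cyclic poly.
From mathcomp Require Import Rstruct.
From mathcomp.real_closed Require Import complex.
From Coquelicot Require Import Coquelicot.
Open Scope R_scope.

Lemma sum_n_S (b : nat -> R) n : sum_n b (S n) = sum_n b n + b (S n).
Proof. by rewrite sum_Sn. Qed.

Lemma Series_le_gen (u v : nat -> R) : ex_series u -> ex_series v ->
  (forall n, u n <= v n) -> Series u <= Series v.
Proof.
move=> eu ev h.
have := Series_le (fun _ => 0) (fun n => v n - u n).
rewrite Series_minus //.
have -> : Series (fun _ : nat => 0) = 0.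
  rewrite (Series_ext _ (fun n : nat => 0 * 0)); last by move=> n; ring.
  by rewrite Series_scal_l Rmult_0_l.
move=> H; suff: 0 <= Series v - Series u by lra.
apply: H; last by apply: ex_series_minus.
move=> n; move: (h n); lra.
Qed.

Lemma im_le_Cmod' (c : C) : Rabs (Im c) <= Cmod c.
Proof.
case: c => x y; rewrite /Cmod /=.
rewrite -sqrt_Rsqr_abs; apply: sqrt_le_1_alt; rewrite /Rsqr.
have := pow2_ge_0 x; nra.
Qed.

Lemma CSeries_bound (a : nat -> C) (b : nat -> R) (B : R) :
  (forall n, Cmod (a n) <= b n) -> (forall N, sum_n b N <= B) ->
  Cmod (CSeries a) <= B.
Proof.
move=> hab hB.
have b0 : forall n, 0 <= b n by move=> n; apply: Rle_trans (hab n); apply: Cmod_ge_0.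
have exb : ex_series b.
  have [l hl] : ex_finite_lim_seq (sum_n b).
    apply: (ex_finite_lim_seq_incr _ B) => // n.
    rewrite sum_n_S; move: (b0 (S n)); lra.
  by exists l.
have SbB : Series b <= B.
  have h := is_lim_seq_le (sum_n b) (fun _ => B) (Series b) B hB (Series_correct _ exb) (is_lim_seq_const B).
  exact h.
have exRe : ex_series (fun n => Re (a n)).
  apply: (ex_series_le _ b) => // n.
  apply: Rle_trans (hab n); apply: re_le_Cmod.
have exIm : ex_series (fun n => Im (a n)).
  apply: (ex_series_le _ b) => // n.
  apply: Rle_trans (hab n); apply: im_le_Cmod'.
rewrite /CSeries.
set X := Series _; set Y := Series _.
have B0 : 0 <= B by apply: Rle_trans (hB O); rewrite sum_O; apply: b0.
case: (Req_dec (Cmod (X, Y)) 0) => [-> //|hne].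
have rpos : 0 < Cmod (X,Y) by move: (Cmod_ge_0 (X,Y)); lra.
set r := Cmod (X,Y) in hne rpos *.
have r2 : r ^ 2 = X ^ 2 + Y ^ 2 by rewrite /r Cmod2_alt.
have -> : r = X / r * X + Y / r * Y.
  field_simplify_eq; [lra | lra].
have -> : X / r * X + Y / r * Y = Series (fun n => X / r * Re (a n) + Y / r * Im (a n)).
  rewrite Series_plus; last 2 first.
  - by apply: ex_series_scal_l.
  - by apply: ex_series_scal_l.
  by rewrite !Series_scal_l.
apply: Rle_trans SbB; apply: Series_le_gen => //.
  apply: ex_series_plus; by apply: ex_series_scal_l.
move=> n; apply: Rle_trans (hab n).
set c := X / r; set d := Y / r.
have cd : c ^ 2 + d ^ 2 = 1 by rewrite /c /d; field_simplify_eq; lra.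
set u := a n; case: u => x y /=.
rewrite /Cmod /=.
apply: Rle_trans (Rle_abs _) _.
rewrite -sqrt_Rsqr_abs; apply: sqrt_le_1_alt.
rewrite /Rsqr.
have : 0 <= (c * y - d * x) ^ 2 by apply: pow2_ge_0.
nra.
Qed.

Lemma Cmod_Cpown z n : Cmod (Cpown z n) = Cmod z ^ n.
Proof. elim: n => [|n IH] /=; first by rewrite Cmod_1. by rewrite Cmod_mult IH. Qed.

Lemma geom_sum r N : r <> 1 -> sum_n (fun j => r ^ S j) N = r * (1 - r ^ S N) / (1 - r).
Proof.
move=> hr; have hr' : 1 - r <> 0 by lra.
elim: N => [|N IH]; first by rewrite sum_O /=; field.
rewrite sum_n_S IH /=; field; lra.
Qed.

Lemma log_one_minus_bound w : Cmod w <= 1/2 -> Cmod (log_one_minus w) <= 2 * Cmod w.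
Proof.
move=> hw; rewrite /log_one_minus Cmod_opp.
have w0 := Cmod_ge_0 w.
apply: (CSeries_bound _ (fun j => Cmod w ^ S j)).
- move=> j; rewrite Cmod_div; last first.
    move=> h; have hj : INR (S j) <> 0 by apply: not_0_INR.
    by apply: hj; case: h.
  rewrite Cmod_Cpown Cmod_R Rabs_pos_eq; last by apply: pos_INR.
  have h1 : 1 <= INR (S j) by rewrite S_INR; have := pos_INR j; lra.
  have hp : 0 <= Cmod w ^ S j by apply: pow_le.
  rewrite /Rdiv; apply: (Rle_trans _ (Cmod w ^ S j * 1)); last lra.
  apply: Rmult_le_compat_l => //.
  rewrite -Rinv_1; apply: Rinv_le_contravar; lra.
- move=> N; rewrite geom_sum; last lra.
  have hp : 0 <= Cmod w ^ S N * Cmod w by apply: Rmult_le_pos => //; apply: pow_le.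
  apply: (Rle_trans _ (Cmod w / (1 - Cmod w))).
    rewrite /Rdiv; apply: Rmult_le_compat_r.
      apply: Rlt_le; apply: Rinv_0_lt_compat; lra.
    have : 0 <= Cmod w ^ S N by apply: pow_le.
    nra.
  apply: (Rle_trans _ (Cmod w / (1/2))).
    rewrite /Rdiv; apply: Rmult_le_compat_l => //.
    apply: Rinv_le_contravar; lra.
  lra.
Qed.

Lemma bernoulli a b t : 0 <= b <= a -> a ^ S t - b ^ S t >= INR (S t) * b ^ t * (a - b).
Proof.
move=> [hb hab]; elim: t => [|t IH]; first by rewrite /=; lra.
have e1 : a ^ S (S t) - b ^ S (S t) = a * (a ^ S t - b ^ S t) + b ^ S t * (a - b) by simpl; ring.
rewrite e1 S_INR.
have hbt : 0 <= b ^ t by apply: pow_le.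
have h2 : a * (a ^ S t - b ^ S t) >= a * (INR (S t) * b ^ t * (a - b)).
  apply: Rmult_ge_compat_l; lra.
have h3 : a * (INR (S t) * b ^ t * (a - b)) >= b * (INR (S t) * b ^ t * (a - b)).
  apply: Rmult_ge_compat_r; last lra.
  apply: Rle_ge; apply: Rmult_le_pos; [apply: Rmult_le_pos => //; apply: pos_INR| lra].
move: h2 h3; simpl; nra.
Qed.

Lemma key_real (a b : R) t : 1 <= b -> a = b + 1 ->
  / a ^ S (S t) <= / INR (S t) * (/ b ^ S t - / a ^ S t).
Proof.
move=> hb hab.
have hbt : 0 < b ^ t by apply: pow_lt; lra.
have hBt : 0 < b ^ S t by apply: pow_lt; lra.
have hAt : 0 < a ^ S t by apply: pow_lt; lra.
have hb0 : 0 <= b <= a by lra.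
have hbern := bernoulli a b t hb0.
have htp : 0 < INR (S t) by apply: lt_0_INR; lia.
have eq1 : / INR (S t) * (/ b ^ S t - / a ^ S t) - / a ^ S (S t)
   = (a * (a ^ S t - b ^ S t) - INR (S t) * b ^ S t) / (INR (S t) * a * a ^ S t * b ^ S t).
  have e2 : a ^ S (S t) = a * a ^ S t by [].
  rewrite e2; field; repeat split; lra.
suff : 0 <= / INR (S t) * (/ b ^ S t - / a ^ S t) - / a ^ S (S t) by lra.
rewrite eq1; apply: Rmult_le_pos; last first.
  apply: Rlt_le; apply: Rinv_0_lt_compat.
  repeat apply: Rmult_lt_0_compat => //; lra.
have e3 : b ^ S t = b * b ^ t by [].
have : a * (INR (S t) * b ^ t * (a - b)) >= INR (S t) * b ^ S t.
  rewrite e3; have : 0 <= INR (S t) * b ^ t by nra.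
  nra.
have : a * (a ^ S t - b ^ S t) >= a * (INR (S t) * b ^ t * (a - b)).
  apply: Rmult_ge_compat_l => //; lra.
lra.
Qed.

Lemma key_ineq (p t : nat) : (1 <= t)%nat -> (2 <= p)%nat ->
  / INR p ^ (S t) <= / INR t * (/ INR (p - 1) ^ t - / INR p ^ t).
Proof.
move=> ht hp.
have hp2 : 2 <= INR p.
  have := le_INR 2 p (elimT leP hp); simpl; lra.
have ep : INR (p - 1) = INR p - 1.
  change (INR (Nat.sub p 1) = INR p - 1).
  rewrite minus_INR; last by apply/leP; apply: leq_trans hp.
  done.
rewrite ep.
case: t ht => [//|t] _.
apply: key_real; lra.
Qed.

Definition dterm (P t : nat) (c : R) (p : nat) : R :=
  if (P < p)%nat then c * (/ INR (p - 1) ^ t - / INR p ^ t) else 0.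

Lemma tele_sum P t c N : @eq R (sum_n (dterm P t c) N)
  (if (N <= P)%nat then 0 else c * (/ INR P ^ t - / INR N ^ t)).
Proof.
elim: N => [|N IH]; first by rewrite sum_O /dterm ltn0 leq0n.
rewrite sum_n_S IH /dterm subn1 succnK.
case: (ltnP P N) => h.
- rewrite (ifT _ _ (ltnW h : (P < N.+1)%nat)).
  rewrite (ifF _ _ (_ : (N < P)%nat = false)); last by rewrite ltnNge (ltnW h).
  ring.
- case: (eqVneq N P) => [->|hne].
  + rewrite (ifT _ _ (ltnSn P)) (ifF _ _ (ltnn P)); ring.
  + have hlt : (N < P)%nat by rewrite ltn_neqAle hne h.
    rewrite (ifF _ _ (_ : (P < N.+1)%nat = false)); last by apply/negbTE; rewrite -leqNgt.
    rewrite (ifT _ _ hlt); ring.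
Qed.

Lemma logLP_bound P s psi : (2 <= P)%nat -> (2 <= s)%nat -> (forall n, Cmod (psi n) <= 1) ->
  Cmod (logLP P s psi) <= 2 / (INR (s - 1) * INR P ^ (s - 1)).
Proof.
move=> hP hs hpsi.
rewrite /logLP Cmod_opp.
case: s hs => [//|t] hs.
rewrite subn1 succnK.
have ht : (1 <= t)%nat by [].
have htR : 0 < INR t by apply: lt_0_INR; apply/ltP.
have hPR : 2 <= INR P by have := le_INR 2 P (elimT leP hP); simpl; lra.
apply: (CSeries_bound _ (dterm P t (2 * / INR t))).
- move=> p; rewrite /dterm; case hPp: (P < p)%nat.
  + have hp : (2 <= p)%nat by apply: leq_trans hPp; apply: leq_trans hP _.
    have key := key_ineq p t ht hp.
    have hpR : 2 <= INR p by have := le_INR 2 p (elimT leP hp); simpl; lra.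
    have hps : 0 < INR p ^ S t by apply: pow_lt; lra.
    have hps2 : 2 <= INR p ^ S t.
      simpl; have : 1 <= INR p ^ t by apply: pow_R1_Rle; lra.
      nra.
    have hinv : 0 < / INR p ^ S t by apply: Rinv_0_lt_compat.
    rewrite andbT; case: (prime p); last first.
      rewrite Cmod_0 Rmult_assoc; lra.
    set w := Cmult _ _.
    have hw : Cmod w <= / INR p ^ S t.
      rewrite /w Cmod_mult Cmod_R Rabs_pos_eq; last lra.
      have := hpsi p; have := Cmod_ge_0 (psi p); nra.
    have hw2 : / INR p ^ S t <= 1/2.
      apply: (Rle_trans _ (/ 2)); last lra.
      apply: Rinv_le_contravar; lra.
    apply: Rle_trans (log_one_minus_bound _ _) _; first lra.
    rewrite Rmult_assoc; apply: Rmult_le_compat_l; lra.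
  + by rewrite andbF Cmod_0; apply: Rle_refl.
- move=> N; rewrite tele_sum; case: ifP => _.
  + apply: Rle_trans (_ : 0 <= _); first lra.
    apply: Rlt_le; apply: Rdiv_lt_0_compat; first lra.
    apply: Rmult_lt_0_compat => //; apply: pow_lt; lra.
  + have hPt : 0 < INR P ^ t by apply: pow_lt; lra.
    have hNt : 0 <= / INR N ^ t.
      case: (Req_dec (INR N ^ t) 0) => [->|hn]; first by rewrite Rinv_0; lra.
      apply: Rlt_le; apply: Rinv_0_lt_compat.
      have := pow_le (INR N) t (pos_INR N); lra.
    have e : 2 / (INR t * INR P ^ t) = 2 * / INR t * / INR P ^ t by field; lra.
    rewrite e; apply: Rmult_le_compat_l; first by apply: Rmult_le_pos; [lra| apply: Rlt_le; apply: Rinv_0_lt_compat].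
    lra.
Qed.

Lemma Csum_list_bound {A : Type} (l : list A) (f : A -> C) (g : A -> R) :
  (forall a, In a l -> Cmod (f a) <= g a) ->
  Cmod (Csum_list l f) <= fold_right (fun a acc => g a + acc) 0 l.
Proof.
elim: l => [|a l IH] h /=; first by rewrite Cmod_0; apply: Rle_refl.
apply: Rle_trans (Cmod_triangle _ _) _.
apply: Rplus_le_compat; first by apply: h; left.
by apply: IH => b hb; apply: h; right.
Qed.

Lemma geom_tail D x K N : x <> 1 -> @eq R
  (sum_n (fun k => if (K < k)%nat then D * x ^ k else 0) N)
  (if (N <= K)%nat then 0 else D * (x ^ (S K) - x ^ (S N)) / (1 - x)).
Proof.
move=> hx; have hx' : 1 - x <> 0 by lra.
elim: N => [|N IH]; first by rewrite sum_O ltn0 leq0n.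
rewrite sum_n_S IH.
case: (ltnP K N) => h.
- rewrite (ifT _ _ (ltnW h : (K < N.+1)%nat)).
  rewrite (ifF _ _ (_ : (N < K)%nat = false)); last by rewrite ltnNge (ltnW h).
  simpl; field; lra.
- case: (eqVneq N K) => [->|hne].
  + rewrite (ifT _ _ (ltnSn K)) (ifF _ _ (ltnn K)); simpl; field; lra.
  + have hlt : (N < K)%nat by rewrite ltn_neqAle hne h.
    rewrite (ifF _ _ (_ : (K < N.+1)%nat = false)); last by apply/negbTE; rewrite -leqNgt.
    rewrite (ifT _ _ hlt); ring.
Qed.

Lemma fold_geom (Cc y : R) a n : 0 <= Cc -> 0 <= y < 1 ->
  fold_right (fun m acc => Cc * y ^ m + acc) 0 (List.seq a n) <= Cc * y ^ a / (1 - y).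
Proof.
move=> hC hy; elim: n a => [|n IH] a /=.
  apply: Rmult_le_pos; last by apply: Rlt_le; apply: Rinv_0_lt_compat; lra.
  by apply: Rmult_le_pos => //; apply: pow_le; lra.
apply: (Rle_trans _ (Cc * y ^ a + Cc * y ^ S a / (1 - y))).
  by apply: Rplus_le_compat_l; apply: IH.
have -> : Cc * y ^ a / (1 - y) = Cc * y ^ a + Cc * y ^ S a / (1 - y) by simpl; field; lra.
lra.
Qed.

Lemma mobius_bound k : Rabs (mobius k) <= 1.
Proof.
rewrite /mobius; case: (k == 0%nat); first by rewrite Rabs_R0; lra.
case: (all _ _); last by rewrite Rabs_R0; lra.
by rewrite pow_1_abs; lra.
Qed.

Lemma term_ineq (P K k s : nat) : (2 <= P)%nat -> (1 <= K)%nat -> (K < k)%nat -> (k <= s)%nat ->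
  / INR k * (2 / (INR (s - 1) * INR P ^ (s - 1))) <= 2 * INR P / INR K ^ 2 * (/ INR P) ^ s.
Proof.
move=> hP hK hk hks.
have hPR : 2 <= INR P by have := le_INR 2 P (elimT leP hP); simpl; lra.
have hKR : 1 <= INR K by have := le_INR 1 K (elimT leP hK); simpl; lra.
have hkR : INR K + 1 <= INR k by rewrite -S_INR; apply: le_INR; apply/leP.
have hsK : (K <= s - 1)%nat by rewrite leq_subRL; [apply: leq_trans hks; rewrite add1n| apply: leq_trans hks; apply: leq_trans hk].
have hsR : INR K <= INR (s - 1) by apply: le_INR; apply/leP.
have es : s = S (s - 1).
  by rewrite subn1 prednK //; apply: leq_trans hks; apply: leq_trans hk.
have hQ : 0 < INR P ^ (s - 1) by apply: pow_lt; lra.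
set Q := INR P ^ (s - 1) in hQ *.
have eR : (/ INR P) ^ s = / (Q * INR P).
  rewrite -Rinv_pow; last lra.
  rewrite es /= Rmult_comm; done.
rewrite eR.
have e1 : 2 * INR P / INR K ^ 2 * / (Q * INR P) = 2 / (INR K ^ 2 * Q) by field; repeat split; lra.
rewrite e1.
have e2 : / INR k * (2 / (INR (s - 1) * Q)) = 2 / (INR k * INR (s - 1) * Q) by field; repeat split; lra.
rewrite e2.
rewrite /Rdiv; apply: Rmult_le_compat_l; first lra.
apply: Rinv_le_contravar; first by apply: Rmult_lt_0_compat => //; nra.
apply: Rmult_le_compat_r; first lra.
simpl; nra.
Qed.

Lemma Sm_bound P K m (chi : nat -> C) : (2 <= P)%nat -> (1 <= K)%nat -> (1 <= m)%nat ->
  (forall n, Cmod (chi n) <= 1) ->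
  Cmod (CSeries (fun k =>
         if (K < k)%nat
         then Cmult (RtoC (mobius k / INR k))
                    (logLP P (k * m) (fun n => Cpown (chi n) (k * m)))
         else RtoC 0))
  <= (2 * INR P / INR K ^ 2) * (/ INR P ^ m) ^ (S K) / (1 - / INR P ^ m).
Proof.
move=> hP hK hm hchi.
have hPR : 2 <= INR P by have := le_INR 2 P (elimT leP hP); simpl; lra.
have hKR : 1 <= INR K by have := le_INR 1 K (elimT leP hK); simpl; lra.
have hPm : 2 <= INR P ^ m.
  case: m hm => [//|m] _; simpl; have : 1 <= INR P ^ m by apply: pow_R1_Rle; lra.
  nra.
set x := / INR P ^ m.
have hx : 0 < x <= 1/2.
  split; first by apply: Rinv_0_lt_compat; lra.
  rewrite /x; apply: (Rle_trans _ (/ 2)); last lra.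
  apply: Rinv_le_contravar; lra.
set D := 2 * INR P / INR K ^ 2.
have hD : 0 <= D.
  rewrite /D /Rdiv; apply: Rmult_le_pos; first lra.
  apply: Rlt_le; apply: Rinv_0_lt_compat; apply: pow_lt; lra.
apply: (CSeries_bound _ (fun k => if (K < k)%nat then D * x ^ k else 0)).
- move=> k; case hk: (K < k)%nat; last by rewrite Cmod_0; apply: Rle_refl.
  have hk1 : (0 < k)%nat by apply: leq_trans hk.
  have hks : (k <= k * m)%nat by rewrite leq_pmulr.
  have hs2 : (2 <= k * m)%nat by apply: leq_trans hks; apply: leq_trans hk.
  have hpsi : forall n, Cmod (Cpown (chi n) (k * m)) <= 1.
    move=> n; rewrite Cmod_Cpown; rewrite -(pow1 (k * m)); apply: pow_incr; split; [apply: Cmod_ge_0| apply: hchi].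
  rewrite Cmod_mult Cmod_R.
  have hkR : 0 < INR k by apply: lt_0_INR; apply/ltP.
  have hmu : Rabs (mobius k / INR k) <= / INR k.
    rewrite Rabs_mult Rabs_inv (Rabs_pos_eq (INR k)); last lra.
    have := mobius_bound k; have : 0 < / INR k by apply: Rinv_0_lt_compat.
    nra.
  have hL := logLP_bound P (k * m) _ hP hs2 hpsi.
  apply: (Rle_trans _ (/ INR k * (2 / (INR (k * m - 1) * INR P ^ (k * m - 1))))).
    apply: Rmult_le_compat => //; [apply: Rabs_pos| apply: Cmod_ge_0].
  apply: Rle_trans (term_ineq P K k (k * m) hP hK hk hks) _.
  rewrite /D /x -Rinv_pow; last lra.
  rewrite -(Rinv_pow (INR P ^ m)); last by apply: pow_nonzero; lra.
  rewrite -pow_mult.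
  have -> : Nat.mul m k = (k * m)%nat by rewrite mulnC.
  apply: Rle_refl.
- move=> N; rewrite geom_tail; last lra.
  have hb : 0 <= D * x ^ S K / (1 - x).
    rewrite /Rdiv; apply: Rmult_le_pos; [apply: Rmult_le_pos => //; apply: pow_le; lra|].
    apply: Rlt_le; apply: Rinv_0_lt_compat; lra.
  case: ifP => _ //.
  rewrite /Rdiv; apply: Rmult_le_compat_r; first by apply: Rlt_le; apply: Rinv_0_lt_compat; lra.
  have : 0 <= x ^ S N by apply: pow_le; lra.
  nra.
Qed.

Lemma E2chi_bound P M K (chi : nat -> C) : (2 <= P)%nat -> (1 <= K)%nat ->
  (forall n, Cmod (chi n) <= 1) ->
  Cmod (E2_chi P M K chi) <= 2 * INR P / (INR K ^ 2 * (INR P - 1) * (INR P ^ K - 1)).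
Proof.
move=> hP hK hchi.
have hPR : 2 <= INR P by have := le_INR 2 P (elimT leP hP); simpl; lra.
have hKR : 1 <= INR K by have := le_INR 1 K (elimT leP hK); simpl; lra.
have hPK : INR P <= INR P ^ K.
  case: K hK hKR => [//|K] _ _; simpl; have : 1 <= INR P ^ K by apply: pow_R1_Rle; lra.
  nra.
set y := / INR P ^ S K.
have hPSK : INR P ^ S K = INR P * INR P ^ K by [].
have hy : 0 < y <= / INR P.
  split; first by apply: Rinv_0_lt_compat; apply: pow_lt; lra.
  apply: Rinv_le_contravar; first lra.
  rewrite hPSK; nra.
have hD : 0 <= 2 * INR P / INR K ^ 2.
  rewrite /Rdiv; apply: Rmult_le_pos; first lra.
  apply: Rlt_le; apply: Rinv_0_lt_compat; apply: pow_lt; lra.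
set Cc := (2 * INR P / INR K ^ 2) * (INR P / (INR P - 1)).
have hC : 0 <= Cc.
  apply: Rmult_le_pos => //; rewrite /Rdiv; apply: Rmult_le_pos; first lra.
  apply: Rlt_le; apply: Rinv_0_lt_compat; lra.
rewrite /E2_chi.
apply: Rle_trans (Csum_list_bound _ _ (fun m => Cc * y ^ m) _) _.
- move=> m /in_seq [hm1 _].
  have hm : (1 <= m)%nat by apply/leP.
  have hmR : 1 <= INR m by have := le_INR 1 m hm1; simpl; lra.
  rewrite Cmod_mult Cmod_R Rabs_pos_eq; last by apply: Rlt_le; apply: Rinv_0_lt_compat; lra.
  have hS := Sm_bound P K m chi hP hK hm hchi.
  apply: Rle_trans (_ : / INR m * (2 * INR P / INR K ^ 2 * (/ INR P ^ m) ^ S K / (1 - / INR P ^ m)) <= _).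
    apply: Rmult_le_compat_l => //; apply: Rlt_le; apply: Rinv_0_lt_compat; lra.
  have hPm : INR P <= INR P ^ m.
    case: m hm hmR {hS hm1} => [//|m] _ _; simpl; have : 1 <= INR P ^ m by apply: pow_R1_Rle; lra.
    nra.
  have hx : 0 < / INR P ^ m <= / INR P.
    split; first by apply: Rinv_0_lt_compat; lra.
    apply: Rinv_le_contravar; lra.
  have exy : (/ INR P ^ m) ^ S K = y ^ m.
    rewrite /y -!Rinv_pow; try (apply: pow_nonzero; lra).
    by rewrite -!pow_mult Nat.mul_comm.
  rewrite exy.
  have hym : 0 <= y ^ m by apply: pow_le; lra.
  have h1 : / (1 - / INR P ^ m) <= INR P / (INR P - 1).
    have -> : INR P / (INR P - 1) = / (1 - / INR P) by field; lra.
    apply: Rinv_le_contravar; last lra.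
    have : / INR P <= / 2 by apply: Rinv_le_contravar; lra.
    lra.
  have hinvm : / INR m <= 1 by rewrite -Rinv_1; apply: Rinv_le_contravar; lra.
  rewrite /Cc /Rdiv.
  have h0 : 0 <= 2 * INR P * / INR K ^ 2 * y ^ m by move: hD; rewrite /Rdiv => hD; apply: Rmult_le_pos.
  have hPi : / INR P <= / 2 by apply: Rinv_le_contravar; lra.
  have h2 : 0 <= / (1 - / INR P ^ m) by apply: Rlt_le; apply: Rinv_0_lt_compat; lra.
  have h3 : 0 <= / INR m by apply: Rlt_le; apply: Rinv_0_lt_compat; lra.
  have e : / INR m * (2 * INR P * / INR K ^ 2 * y ^ m * / (1 - / INR P ^ m))
     = (/ INR m * / (1 - / INR P ^ m)) * (2 * INR P * / INR K ^ 2 * y ^ m) by ring.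
  rewrite e.
  have e' : 2 * INR P * / INR K ^ 2 * (INR P * / (INR P - 1)) * y ^ m
     = (INR P * / (INR P - 1)) * (2 * INR P * / INR K ^ 2 * y ^ m) by ring.
  rewrite e'; apply: Rmult_le_compat_r => //.
  move: h1; rewrite /Rdiv => h1.
  apply: (Rle_trans _ (1 * / (1 - / INR P ^ m))); last lra.
  by apply: Rmult_le_compat_r.
  have hy1 : 0 <= y < 1.
    have : / INR P <= / 2 by apply: Rinv_le_contravar; lra.
    lra.
  apply: Rle_trans (fold_geom Cc y 1 M hC hy1) _.
  have hZ : 0 < INR P ^ K - 1 by lra.
  have e : Cc * y ^ 1 / (1 - y) = 2 * INR P * INR P / (INR K ^ 2 * (INR P - 1) * (INR P * INR P ^ K - 1)).
    rewrite /Cc /y hPSK; field; repeat split; nra.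
  rewrite e.
  have hK2 : 0 < INR K ^ 2 by apply: pow_lt; lra.
  have e2 : 2 * INR P * INR P / (INR K ^ 2 * (INR P - 1) * (INR P * INR P ^ K - 1))
      = (2 * INR P / (INR K ^ 2 * (INR P - 1))) * (INR P / (INR P * INR P ^ K - 1)) by field; repeat split; nra.
  have e3 : 2 * INR P / (INR K ^ 2 * (INR P - 1) * (INR P ^ K - 1))
      = (2 * INR P / (INR K ^ 2 * (INR P - 1))) * (1 / (INR P ^ K - 1)) by field; repeat split; nra.
  rewrite e2 e3; apply: Rmult_le_compat_l.
    apply: Rlt_le; apply: Rdiv_lt_0_compat; [lra| nra].
  apply: (Rmult_le_reg_r ((INR P * INR P ^ K - 1) * (INR P ^ K - 1))); first nra.
  have -> : INR P / (INR P * INR P ^ K - 1) * ((INR P * INR P ^ K - 1) * (INR P ^ K - 1)) = INR P * (INR P ^ K - 1) by field; nra.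
  have -> : 1 / (INR P ^ K - 1) * ((INR P * INR P ^ K - 1) * (INR P ^ K - 1)) = INR P * INR P ^ K - 1 by field; nra.
  lra.
Qed.
Section PR.
Local Open Scope nat_scope.
Lemma prim_root (q : nat) : prime q -> exists g : nat,
  (g ^ (q - 1) %% q = 1)%N /\ forall n, coprime n q -> exists i, n %% q = g ^ i %% q.
Proof.
move=> pq.
have q1 : 1 < q by apply: prime_gt1.
have /cyclicP [u hu] := units_Zp_cyclic pq.
have valX : forall i, (val ((u ^+ i)%g : {unit 'Z_q}) : 'Z_q) = (nat_of_ord (val u) ^ i) %% q :> nat.
  move=> i; rewrite unit_Zp_expg /=; congr (_ %% _); exact: (Zp_cast q1).
exists (nat_of_ord (val u)); split.
- have h1 : (u ^+ #[u])%g = 1%g by apply: expg_order.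
  have ho : #[u]%g = q - 1.
    rewrite /order -hu card_units_Zp ?prime_gt0 //.
    by rewrite totient_prime // subn1.
  have := valX (q - 1); rewrite -ho h1 /= => <-.
  by rewrite modn_small.
- move=> n cn.
  have hx : (((n%:R)%R : 'Z_q) \is a GRing.unit) by rewrite unitZpE // coprime_sym.
  pose v : {unit 'Z_q} := FinRing.unit 'Z_q hx.
  have : v \in <[u]>%g by rewrite -hu inE.
  case/cycleP => i hi.
  exists i.
  by rewrite -valX -hi /= val_Zp_nat.
Qed.
End PR.
Definition phi (z : C) : complex.complex R := complex.Complex (fst z) (snd z).

Lemma phi_mul (a b : C) : phi (Cmult a b) = GRing.mul (phi a) (phi b).
Proof.
case: a => a1 a2; case: b => b1 b2.
rewrite /phi /=.
reflexivity.
Qed.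

Lemma phi_pow z n : phi (Cpown z n) = GRing.exp (phi z) n.
Proof.
elim: n => [|n IH]; first reflexivity.
by rewrite /= phi_mul IH GRing.exprS.
Qed.

Lemma phi_inj a b : phi a = phi b -> a = b.
Proof. case: a => a1 a2; case: b => b1 b2; rewrite /phi /=; by case=> -> ->. Qed.

Lemma in_In {T : eqType} (x : T) (s : seq T) : x \in s -> In x s.
Proof.
elim: s => [//|y s IH]; rewrite inE => /orP [/eqP ->|h]; [by left| by right; apply: IH].
Qed.

Lemma root_count n (l : list C) : (0 < n)%nat -> NoDup l ->
  (forall z, In z l -> Cpown z n = RtoC 1) -> (length l <= n)%nat.
Proof.
move=> n0 nd hz.
have -> : length l = size (map phi l) by rewrite size_map.
apply: max_unity_roots => //.
- apply/allP => x /mapP [z /in_In hzl ->].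
  by rewrite unity_rootE -phi_pow hz.
- elim: l nd {hz} => [//|a l IH] nd.
  move/NoDup_cons_iff: nd => [na nd].
  rewrite /= IH // andbT.
  apply/mapP => [[z hz e]].
  by apply: na; rewrite (phi_inj _ _ e); apply: in_In.
Qed.

Section Chars.
Variable q : nat.

Lemma dc_period chi r j : DirChar q chi -> chi (r + j * q)%nat = chi r.
Proof.
move=> [h1 [hm [hp hc]]]; elim: j => [|j IH]; first by rewrite mul0n addn0.
by rewrite mulSnr addnA hp IH.
Qed.

Lemma dc_mod chi n : DirChar q chi -> chi n = chi (n %% q)%nat.
Proof. by move=> hd; rewrite {1}(divn_eq n q) addnC dc_period. Qed.

Lemma dc_pow chi g i : DirChar q chi -> chi (g ^ i)%nat = Cpown (chi g) i.
Proof.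
move=> hd; have [h1 [hm _]] := hd.
elim: i => [|i IH]; first by rewrite expn0.
by rewrite expnS hm IH.
Qed.

Lemma pow_eq1 (r : R) k : 0 <= r -> (0 < k)%nat -> r ^ k = 1 -> r = 1.
Proof.
move=> r0 k0 h.
case: (Rtotal_order r 1) => [lt|[//|gt]].
- have := pow_lt_1_compat r k (conj r0 lt) (elimT ltP k0); lra.
- have := Rlt_pow_R1 r k gt (elimT ltP k0); lra.
Qed.

Lemma chi_g (g : nat) chi : prime q -> (g ^ (q - 1) %% q = 1)%nat ->
  DirChar q chi -> Cpown (chi g) (q - 1) = RtoC 1.
Proof.
move=> pq hg hd; rewrite -dc_pow // (dc_mod _ _ hd) hg.
by case: hd.
Qed.

Lemma chi_val (g : nat) chi n i : DirChar q chi -> (n %% q = g ^ i %% q)%nat ->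
  chi n = Cpown (chi g) i.
Proof. by move=> hd e; rewrite (dc_mod _ _ hd) e -(dc_mod _ _ hd) dc_pow. Qed.

Lemma chi_zero chi n : DirChar q chi -> ~~ coprime n q -> chi n = RtoC 0.
Proof. by move=> [_ [_ [_ hc]]] h; apply/hc. Qed.

Lemma chi_bound (g : nat) chi : prime q -> (g ^ (q - 1) %% q = 1)%nat ->
  (forall n, coprime n q -> exists i, n %% q = g ^ i %% q)%nat ->
  DirChar q chi -> forall n, Cmod (chi n) <= 1.
Proof.
move=> pq hg hgen hd n.
have q0 : (0 < q - 1)%nat by rewrite subn_gt0 prime_gt1.
have hz : Cmod (chi g) = 1.
  apply: (pow_eq1 _ (q - 1)) => //; first by apply: Cmod_ge_0.
  by rewrite -Cmod_Cpown (chi_g g) // Cmod_1.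
case hc: (coprime n q).
- have [i hi] := hgen n hc.
  by rewrite (chi_val g chi n i hd hi) Cmod_Cpown hz pow1; apply: Rle_refl.
- by rewrite chi_zero ?hc // Cmod_0; lra.
Qed.

Lemma chi_det (g : nat) chi1 chi2 :
  (forall n, coprime n q -> exists i, n %% q = g ^ i %% q)%nat ->
  DirChar q chi1 -> DirChar q chi2 -> chi1 g = chi2 g -> chi1 = chi2.
Proof.
move=> hgen h1 h2 e; apply: functional_extensionality => n.
case hc: (coprime n q).
- have [i hi] := hgen n hc.
  by rewrite (chi_val g chi1 n i h1 hi) (chi_val g chi2 n i h2 hi) e.
- by rewrite !chi_zero ?hc.
Qed.
End Chars.

Lemma NoDup_map_in {A B : Type} (f : A -> B) (l : list A) : NoDup l ->
  (forall a b, In a l -> In b l -> f a = f b -> a = b) -> NoDup (map f l).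
Proof.
elim: l => [|a l IH] nd hinj /=; first by constructor.
move/NoDup_cons_iff: nd => [na nd].
constructor.
- move/in_map_iff => [b [e hb]].
  apply: na; rewrite (hinj a b) //; [by left| by right].
- apply: IH => // x y hx hy; apply: hinj; by right.
Qed.

Lemma fold_const {A : Type} (l : list A) (B : R) :
  fold_right (fun _ acc => B + acc) 0 l = INR (length l) * B.
Proof.
elim: l => [|a l IH]; first by rewrite /=; ring.
change (B + fold_right (fun _ acc => B + acc) 0 l = INR (S (length l)) * B).
rewrite IH S_INR; ring.
Qed.

Theorem mainTheorem8 (q P M K : nat) (chars : list (nat -> C)) :
  prime q -> (2 <= P)%nat -> (1 <= M)%nat -> (1 <= K)%nat ->
  NoDup chars ->
  (forall chi : nat -> C, In chi chars <-> (DirChar q chi /\ chi <> principal_char q)) ->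
  (Cmod (E2 P M K chars) <=
     2 * INR P * INR (q - 1) /
       (INR K ^ 2 * (INR P - 1) * (INR P ^ K - 1)))%R.
Proof.
move=> pq hP hM hK nd hch.
have [g [hg hgen]] := prim_root q pq.
have hdc : forall chi, In chi chars -> DirChar q chi by move=> chi /hch [].
set B := 2 * INR P / (INR K ^ 2 * (INR P - 1) * (INR P ^ K - 1)).
rewrite /E2.
apply: Rle_trans (Csum_list_bound _ _ (fun _ => B) _) _.
  move=> chi hin; apply: E2chi_bound => //.
  exact: (chi_bound q g chi pq hg hgen (hdc chi hin)).
rewrite fold_const.
have hlen : (length chars <= q - 1)%nat.
  have -> : length chars = length (map (fun chi => chi g) chars) by rewrite map_length.
  apply: root_count.
  - by rewrite subn_gt0 prime_gt1.
  - apply: NoDup_map_in => // a b ha hb e.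
    exact: (chi_det q g a b hgen (hdc a ha) (hdc b hb) e).
  - move=> z /in_map_iff [chi [<- hin]].
    exact: (chi_g q g chi pq hg (hdc chi hin)).
have hPR : 2 <= INR P by have := le_INR 2 P (elimT leP hP); simpl; lra.
have hKR : 1 <= INR K by have := le_INR 1 K (elimT leP hK); simpl; lra.
have hPK : INR P <= INR P ^ K.
  case: K hK hKR {B} => [//|K] _ _; simpl; have : 1 <= INR P ^ K by apply: pow_R1_Rle; lra.
  nra.
have hB : 0 <= B.
  rewrite /B; apply: Rlt_le; apply: Rdiv_lt_0_compat; first lra.
  apply: Rmult_lt_0_compat; [apply: Rmult_lt_0_compat; [apply: pow_lt|]|]; lra.
have -> : 2 * INR P * INR (q - 1) / (INR K ^ 2 * (INR P - 1) * (INR P ^ K - 1)) = INR (q - 1) * B.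
  rewrite /B /Rdiv; ring.
apply: Rmult_le_compat_r => //.
by apply: le_INR; apply/leP.
Qed.
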